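(* Let $\mathbb X,\mathbb Y$ be Euclidean spaces, $\varphi\colon\mathbb X\to\mathbb R$ locally Lipschitz, $\Phi\colon\mathbb X\rightrightarrows\mathbb Y$ with closed graph, $\bar y\in\operatorname{Im}\Phi$, and consider (P): $\min\{\varphi(x)\mid\bar y\in\Phi(x)\}$. Let $\bar x$ be feasible for (P), $\gamma_0\geq1$, $\gamma\geq1$, and $u\in\mathbb S_{\mathbb X}$. Then $u$ is critical of order $(\gamma_0,\gamma)$ for (P) at $\bar x$ if and only if there exist sequences $u_k\to u$ and $t_k\downarrow 0$ such that $$\frac{\operatorname{dist}(\varphi(\bar x),M_0(\bar x+t_ku_k))}{(t_k\|u_k\|)^{\gamma_0}}\to0,\qquad \frac{\operatorname{dist}(\bar y,\Phi(\bar x+t_ku_k))}{(t_k\|u_k\|)^{\gamma}}\to0,$$ where $M_0(x):=\varphi(x)+\mathbb R_+$. Moreover, if $\gamma_0=\gamma$, this is further equivalent to $u\in\ker D_\gamma M(\bar x,(\varphi(\bar x),\bar y))$ for the mapping $M\colon\mathbb X\rightrightarrows\mathbb R\times\mathbb Y$, $M(x):=M_0(x)\times\Phi(x)$.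
   Context: $u\in\mathbb X$ is critical of order $(\gamma_0,\gamma)$ for (P) at $\bar x$ if there are $u_k\to u$, $\alpha_k\to0$ in $\mathbb R$, $v_k\to0$ in $\mathbb Y$, $t_k\downarrow0$ with $(\bar x+t_ku_k,\varphi(\bar x)+(t_k\|u_k\|)^{\gamma_0}\alpha_k)\in\operatorname{epi}\varphi$ and $(\bar x+t_ku_k,\bar y+(t_k\|u_k\|)^\gamma v_k)\in\operatorname{gph}\Phi$ for all $k$. For a mapping $M$ with closed graph and $(\bar x,\bar z)\in\operatorname{gph}M$, the graphical pseudo-derivative of order $\gamma$, $D_\gamma M(\bar x,\bar z)$, assigns to $u$ all $w$ such that there are $u_k\to u$, $w_k\to w$, $t_k\downarrow0$ with $(\bar x+t_ku_k,\bar z+(t_k\|u_k\|)^\gamma w_k)\in\operatorname{gph}M$; $\ker D_\gamma M(\bar x,\bar z)=\{u\mid 0\in D_\gamma M(\bar x,\bar z)(u)\}$. $\mathbb S_{\mathbb X}$ is the unit sphere. *)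

(* Defs.v *)
(* Euclidean spaces X = R^n, Y = R^m realised as
   row vectors 'rV[R]_n with the EUCLIDEAN norm [enorm] defined below
   (the library's norm on 'rV is the sup norm; the topology is the same). *)
From HB Require Import structures.
From mathcomp Require Import all_boot all_order all_algebra.
From mathcomp Require Import all_classical all_reals all_analysis.
Set Implicit Arguments. Unset Strict Implicit. Unset Printing Implicit Defensive.
Import Order.TTheory GRing.Theory Num.Theory.
Import numFieldNormedType.Exports.
Local Open Scope classical_set_scope.
Local Open Scope ring_scope.

Definition enorm {R : realType} {n : nat} (v : 'rV[R]_n) : R :=
  Num.sqrt (\sum_(i < n) v ord0 i ^+ 2).

(* distance from a point to a set, in the extended reals (+oo for the empty set) *)
Definition setdist_rV {R : realType} {n : nat} (a : 'rV[R]_n) (S : set 'rV[R]_n) : \bar R :=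
  ereal_inf [set (enorm (a - s))%:E | s in S].

Definition setdist_R {R : realType} (a : R) (S : set R) : \bar R :=
  ereal_inf [set (`|a - s|)%:E | s in S].

Definition locally_lipschitz {R : realType} {n : nat} (f : 'rV[R]_n -> R) : Prop :=
  forall x : 'rV[R]_n, exists (L r : R), 0 < r /\
    forall y z : 'rV[R]_n, enorm (y - x) < r -> enorm (z - x) < r ->
      `|f y - f z| <= L * enorm (y - z).

Definition gph {R : realType} {n : nat} {Z : Type} (M : 'rV[R]_n -> set Z)
  : set ('rV[R]_n * Z) := [set p | M p.1 p.2].

Definition epi {R : realType} {n : nat} (f : 'rV[R]_n -> R) : set ('rV[R]_n * R) :=
  [set p | f p.1 <= p.2].

(* t_k decreasing to 0: positive and converging to 0 *)
Definition tends_down_to0 {R : realType} (t : nat -> R) : Prop :=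
  (forall k, 0 < t k) /\ t @ \oo --> (0 : R).

Definition critical {R : realType} {n m : nat} (phi : 'rV[R]_n -> R)
  (Phi : 'rV[R]_n -> set 'rV[R]_m) (ybar : 'rV[R]_m) (xbar : 'rV[R]_n)
  (g0 g : R) (u : 'rV[R]_n) : Prop :=
  exists (uk : nat -> 'rV[R]_n) (ak : nat -> R) (vk : nat -> 'rV[R]_m)
         (tk : nat -> R),
    uk @ \oo --> u /\ ak @ \oo --> (0 : R) /\ vk @ \oo --> (0 : 'rV[R]_m) /\
    tends_down_to0 tk /\
    (forall k, epi phi (xbar + tk k *: uk k,
                        phi xbar + powR (tk k * enorm (uk k)) g0 * ak k)) /\
    (forall k, gph Phi (xbar + tk k *: uk k,
                        ybar + powR (tk k * enorm (uk k)) g *: vk k)).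

Definition pseudo_deriv {R : realType} {n : nat} {Z : normedModType R}
  (M : 'rV[R]_n -> set Z) (g : R) (xbar : 'rV[R]_n) (zbar : Z)
  (u : 'rV[R]_n) (w : Z) : Prop :=
  exists (uk : nat -> 'rV[R]_n) (wk : nat -> Z) (tk : nat -> R),
    uk @ \oo --> u /\ wk @ \oo --> w /\ tends_down_to0 tk /\
    forall k, gph M (xbar + tk k *: uk k,
                     zbar + powR (tk k * enorm (uk k)) g *: wk k).

Definition kerD {R : realType} {n : nat} {Z : normedModType R}
  (M : 'rV[R]_n -> set Z) (g : R) (xbar : 'rV[R]_n) (zbar : Z) : set 'rV[R]_n :=
  [set u | pseudo_deriv M g xbar zbar u 0].

Definition M0 {R : realType} {n : nat} (phi : 'rV[R]_n -> R) (x : 'rV[R]_n) : set R :=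
  [set r | phi x <= r].

Definition Mmap {R : realType} {n m : nat} (phi : 'rV[R]_n -> R)
  (Phi : 'rV[R]_n -> set 'rV[R]_m) (x : 'rV[R]_n) : set (R * 'rV[R]_m) :=
  [set p | M0 phi x p.1 /\ Phi x p.2].

(* Main.v *)
Require Import Defs.
From HB Require Import structures.
From mathcomp Require Import all_boot all_order all_algebra.
From mathcomp Require Import all_classical all_reals all_analysis.
Import Order.TTheory GRing.Theory Num.Theory.
Import numFieldNormedType.Exports.
Local Open Scope classical_set_scope.
Local Open Scope ring_scope.
Set Implicit Arguments. Unset Strict Implicit.

Section Enorm.
Variables (R : realType) (n : nat).
Implicit Types (v w : 'rV[R]_n).

Lemma enorm_ge0 v : 0 <= enorm v.
Proof. exact: sqrtr_ge0. Qed.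

Lemma coord_le_enorm v i : `|v ord0 i| <= enorm v.
Proof.
rewrite -sqrtr_sqr /enorm; apply: ler_wsqrtr.
rewrite (bigD1 i) //= lerDl; apply: sumr_ge0 => j _; exact: sqr_ge0.
Qed.

Lemma mxnorm_le_enorm v : `|v| <= enorm v.
Proof.
rewrite [leLHS]/Num.Def.normr /= mx_normrE.
apply: bigmax_le => [|[i j] _]; first exact: enorm_ge0.
by rewrite /= (ord1 i); exact: coord_le_enorm.
Qed.

Lemma coord_le_mxnorm v i : `|v ord0 i| <= `|v|.
Proof.
have /mapP[j Hj ->] : `|v ord0 i| \in [seq `|v x.1 x.2| | x : 'I_1 * 'I_n].
  by apply/mapP; exists (ord0, i) => //=; rewrite mem_enum.
by rewrite [leRHS]/Num.Def.normr /= mx_normrE; apply/bigmax_geP; right => /=; exists j.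
Qed.

Lemma enorm_le v : enorm v <= Num.sqrt (n%:R) * `|v|.
Proof.
rewrite -(@ger0_norm _ `|v|) // -sqrtr_sqr -sqrtrM ?ler0n //.
apply: ler_wsqrtr.
have -> : n%:R * `|v| ^+ 2 = \sum_(i < n) `|v| ^+ 2.
  by rewrite sumr_const card_ord mulr_natl.
apply: ler_sum => i _; rewrite -real_normK ?num_real //.
rewrite lerXn2r ?nnegrE //; exact: coord_le_mxnorm.
Qed.

Lemma enormZ (c : R) v : enorm (c *: v) = `|c| * enorm v.
Proof.
rewrite /enorm -sqrtr_sqr -sqrtrM ?sqr_ge0 //; congr Num.sqrt.
rewrite mulr_sumr; apply: eq_bigr => i _; by rewrite mxE exprMn.
Qed.

Lemma enormN v : enorm (- v) = enorm v.
Proof. by rewrite -scaleN1r enormZ normrN normr1 mul1r. Qed.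

Lemma enorm0 : enorm (0 : 'rV[R]_n) = 0.
Proof. by rewrite -(scale0r 0) enormZ normr0 mul0r. Qed.

End Enorm.
From mathcomp Require Import all_boot all_order all_algebra.
From mathcomp Require Import all_classical all_reals all_analysis.
Import Order.TTheory GRing.Theory Num.Theory.
Import numFieldNormedType.Exports.
Local Open Scope classical_set_scope.
Local Open Scope ring_scope.
Section E.
Variable R : realType.
Lemma E_squeeze (r : nat -> \bar R) (b : nat -> R) :
  (forall k, (0 <= r k <= (b k)%:E)%E) -> b @ \oo --> 0 -> r @ \oo --> (0 : \bar R).
Proof.
move=> H hb.
have fin k : r k \is a fin_num.
  have /andP[h1 h2] := H k; rewrite ge0_fin_numE //; exact: (le_lt_trans h2 (ltry _)).
apply/fine_cvgP; split; first by apply: nearW.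
apply: (squeeze_cvgr _ (cvg_cst 0) hb); apply: nearW => k /=.
have /andP[h1 h2] := H k; apply/andP; split; rewrite -lee_fin fineK ?fin //.
Qed.
Lemma setdistR_ge0 (a : R) S : (0 <= setdist_R a S)%E.
Proof. by apply/ereal_infP => y [s _ <-]; rewrite lee_fin. Qed.

Lemma setdistrV_ge0 m (a : 'rV[R]_m) S : (0 <= setdist_rV a S)%E.
Proof. by apply/ereal_infP => y [s _ <-]; rewrite lee_fin enorm_ge0. Qed.

Lemma ratio_ge0 (d : \bar R) (p : R) : (0 <= d)%E -> 0 <= p -> (0 <= d * (p^-1)%:E)%E.
Proof. by move=> d0 p0; apply: mule_ge0 => //; rewrite lee_fin invr_ge0. Qed.

Lemma ratio_le (d : \bar R) (p c : R) : (0 <= d)%E -> 0 <= p ->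
  (0 < p -> (d <= (p * c)%:E)%E) -> 0 <= c -> (d * (p^-1)%:E <= c%:E)%E.
Proof.
move=> d0 p0 H c0; have [->|pn0] := eqVneq p 0.
  by rewrite invr0 mule0 lee_fin.
have pp : 0 < p by rewrite lt_def pn0.
apply: le_trans (lee_wpmul2r _ (H pp)) _; first by rewrite lee_fin invr_ge0.
by rewrite -EFinM mulrAC divff // mul1r.
Qed.

Lemma dist_phi_le n (phi : 'rV[R]_n -> R) xbar x (a p : R) : 0 <= p ->
  phi x <= phi xbar + p * a ->
  (0 <= setdist_R (phi xbar) (M0 phi x) * (p^-1)%:E <= `|a|%:E)%E.
Proof.
move=> p0 H; rewrite ratio_ge0 ?setdistR_ge0 //=.
apply: ratio_le => //; first exact: setdistR_ge0.
move=> pp; apply: ereal_inf_lbound; exists (phi xbar + p * a) => //.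
by rewrite opprD addNKr normrN normrM ger0_norm.
Qed.

Lemma dist_Phi_le n m (Phi : 'rV[R]_n -> set 'rV[R]_m) x ybar (v : 'rV[R]_m) (p : R) : 0 <= p ->
  Phi x (ybar + p *: v) ->
  (0 <= setdist_rV ybar (Phi x) * (p^-1)%:E <= (enorm v)%:E)%E.
Proof.
move=> p0 H; rewrite ratio_ge0 ?setdistrV_ge0 //=.
apply: ratio_le => //; [exact: setdistrV_ge0| |exact: enorm_ge0].
move=> pp; apply: ereal_inf_lbound; exists (ybar + p *: v) => //.
by rewrite opprD addNKr enormN enormZ ger0_norm.
Qed.

Lemma setdist_phi_ge n (phi : 'rV[R]_n -> R) xbar x :
  ((Num.max 0 (phi x - phi xbar))%:E <= setdist_R (phi xbar) (M0 phi x))%E.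
Proof.
apply/ereal_infP => y [s Hs <-]; rewrite lee_fin ge_max normr_ge0 /=.
rewrite distrC; apply: le_trans (ler_norm _); exact: lerB.
Qed.

Lemma ratio_fin (d : \bar R) (p : R) : (0 <= d)%E -> 0 < p ->
  (d * (p^-1)%:E)%E \is a fin_num -> d \is a fin_num.
Proof.
move=> + pp; case: d => [r| |] //= _.
by rewrite gt0_mulye // lte_fin invr_gt0.
Qed.
End E.
Section Main.
Variables (R : realType) (n m : nat)
  (phi : 'rV[R]_n -> R) (Phi : 'rV[R]_n -> set 'rV[R]_m)
  (ybar : 'rV[R]_m) (xbar : 'rV[R]_n) (g0 g : R) (u : 'rV[R]_n).

Lemma part1_fwd : critical phi Phi ybar xbar g0 g u ->
   exists (uk : nat -> 'rV[R]_n) (tk : nat -> R),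
     uk @ \oo --> u /\ tends_down_to0 tk /\
     (fun k => (setdist_R (phi xbar) (M0 phi (xbar + tk k *: uk k)%R)
                * ((powR (tk k * enorm (uk k)) g0)^-1)%R%:E)%E) @ \oo --> (0 : \bar R) /\
     (fun k => (setdist_rV ybar (Phi (xbar + tk k *: uk k)%R)
                * ((powR (tk k * enorm (uk k)) g)^-1)%R%:E)%E) @ \oo --> (0 : \bar R).
Proof.
move=> [uk [ak [vk [tk [Hu [Ha [Hv [Ht [He Hg]]]]]]]]].
exists uk, tk; do 3 split => //.
- apply: (@E_squeeze _ _ (fun k => `|ak k|)).
    by move=> k; apply: dist_phi_le; [exact: powR_ge0 | exact: (He k)].
  by have := cvg_norm Ha; rewrite normr0; apply; exact: eventually_filter.
- apply: (@E_squeeze _ _ (fun k => enorm (vk k))).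
    by move=> k; apply: dist_Phi_le; [exact: powR_ge0 | exact: (Hg k)].
  have h0 : (fun k => `|vk k|) @ \oo --> (0 : R).
    by have := cvg_norm Hv; rewrite normr0; apply; exact: eventually_filter.
  have h := cvgM (cvg_cst (Num.sqrt (m%:R) : R)) h0.
  rewrite mulr0 in h; have {}h := h eventually_filter eventually_filter.
  apply: (squeeze_cvgr _ (cvg_cst 0) h); apply: nearW => k /=.
  by rewrite enorm_ge0 enorm_le.
Qed.

Lemma part1_bwd : Phi xbar ybar -> 1 <= g0 -> 1 <= g -> enorm u = 1 ->
   (exists (uk : nat -> 'rV[R]_n) (tk : nat -> R),
     uk @ \oo --> u /\ tends_down_to0 tk /\
     (fun k => (setdist_R (phi xbar) (M0 phi (xbar + tk k *: uk k)%R)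
                * ((powR (tk k * enorm (uk k)) g0)^-1)%R%:E)%E) @ \oo --> (0 : \bar R) /\
     (fun k => (setdist_rV ybar (Phi (xbar + tk k *: uk k)%R)
                * ((powR (tk k * enorm (uk k)) g)^-1)%R%:E)%E) @ \oo --> (0 : \bar R)) ->
   critical phi Phi ybar xbar g0 g u.
Proof.
move=> Hx g01 g1 u1 [uk [tk [Hu [Ht [H1 H2]]]]].
have g0n : g0 != 0 by rewrite gt_eqF // (lt_le_trans ltr01).
have gn : g != 0 by rewrite gt_eqF // (lt_le_trans ltr01).
pose good k := 0 < tk k * enorm (uk k) /\
  (setdist_rV ybar (Phi (xbar + tk k *: uk k))
                * ((powR (tk k * enorm (uk k)) g)^-1)%:E)%E \is a fin_num.
move/fine_cvgP: (H1) => [Hf1 Hc1].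
move/fine_cvgP: (H2) => [Hf2 Hc2].
have up : 0 < `|u|.
  rewrite normr_gt0; apply/eqP => u0; move: u1; rewrite u0 enorm0 => /eqP.
  by rewrite eq_sym oner_eq0.
have unorm : \forall k \near \oo, 0 < `|uk k|.
  have := cvgr_gt _ (cvg_norm Hu) 0; apply => //; exact: eventually_filter.
have Hgood : \forall k \near \oo, good k.
  near=> k; split.
    apply: mulr_gt0; first exact: Ht.1 k.
    apply: (lt_le_trans _ (mxnorm_le_enorm (uk k))); near: k; exact: unorm.
  near: k; exact: Hf2.
have [y Hy] : {y : nat -> 'rV[R]_m & forall k, good k ->
    Phi (xbar + tk k *: uk k) (y k) /\
    ((enorm (ybar - y k))%:E < setdist_rV ybar (Phi (xbar + tk k *: uk k))
        + (powR (tk k * enorm (uk k)) g / k.+1%:R)%:E)%E}.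
  apply: (@choice _ _ (fun k yk => good k ->
    Phi (xbar + tk k *: uk k) yk /\
    ((enorm (ybar - yk))%:E < setdist_rV ybar (Phi (xbar + tk k *: uk k))
        + (powR (tk k * enorm (uk k)) g / k.+1%:R)%:E)%E)) => k; have [gk|ngk] := pselect (good k); last by exists 0.
  case: (gk) => [tp fr].
  have qp : 0 < powR (tk k * enorm (uk k)) g := powR_gt0 _ tp.
  have dfin := ratio_fin (setdistrV_ge0 ybar (Phi (xbar + tk k *: uk k))) qp fr.
  have ep : 0 < powR (tk k * enorm (uk k)) g / k.+1%:R by rewrite divr_gt0.
  have [z [s Hs <-] Hz] := lb_ereal_inf_adherent ep dfin.
  by exists s.
pose uk' k := if pselect (good k) then uk k else 0.
pose ak' k := if pselect (good k) then
   Num.max 0 (phi (xbar + tk k *: uk k) - phi xbar) / powR (tk k * enorm (uk k)) g0 else 0.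
pose vk' k := if pselect (good k) then
   (powR (tk k * enorm (uk k)) g)^-1 *: (y k - ybar) else 0.
exists uk', ak', vk', tk; split; [|split; [|split; [|split; [|split]]]] => //.
- apply: cvg_trans Hu; apply: near_eq_cvg; near=> k.
  rewrite /uk'; destruct (pselect (good k)) as [gk|ng]; first by []; exfalso; apply: ng; near: k; exact: Hgood.
- apply: (squeeze_cvgr _ (cvg_cst 0) Hc1); near=> k.
  have r0 : 0 <= fine (setdist_R (phi xbar) (M0 phi (xbar + tk k *: uk k)) *
       (((tk k * enorm (uk k)) `^ g0)^-1)%:E)%E.
    by apply: fine_ge0; apply: ratio_ge0; [exact: setdistR_ge0 | exact: powR_ge0].
  rewrite /ak' /=; destruct (pselect (good k)) as [gk|ngk]; last by rewrite lexx r0.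
  have [tp _] := gk.
  rewrite divr_ge0 ?powR_ge0 ?le_max ?lexx //=.
  have hf : (setdist_R (phi xbar) (M0 phi (xbar + tk k *: uk k)) *
       (((tk k * enorm (uk k)) `^ g0)^-1)%:E)%E \is a fin_num by near: k; exact: Hf1.
  rewrite -lee_fin fineK // EFinM; apply: lee_wpmul2r; last exact: setdist_phi_ge.
  by rewrite lee_fin invr_ge0 powR_ge0.
- apply: norm_cvg0.
  have hh := cvgD Hc2 cvg_harmonic; rewrite addr0 in hh; have {}hh := hh eventually_filter.
  apply: (squeeze_cvgr _ (cvg_cst 0) hh); near=> k.
  have r0 : 0 <= fine (setdist_rV ybar (Phi (xbar + tk k *: uk k)) *
       (((tk k * enorm (uk k)) `^ g)^-1)%:E)%E.
    by apply: fine_ge0; apply: ratio_ge0; [exact: setdistrV_ge0 | exact: powR_ge0].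
  rewrite /vk' /=; destruct (pselect (good k)) as [gk|ngk].
    have [tp fr] := gk.
    have qp : 0 < powR (tk k * enorm (uk k)) g := powR_gt0 _ tp.
    have dfin := ratio_fin (setdistrV_ge0 ybar (Phi (xbar + tk k *: uk k))) qp fr.
    have [_ Hlt] := Hy k gk.
    rewrite normr_ge0 /=.
    apply: le_trans (mxnorm_le_enorm _) _.
    rewrite enormZ ger0_norm ?invr_ge0 ?powR_ge0 // -opprB enormN.
    move: Hlt; rewrite -(fineK dfin) -EFinD lte_fin => Hlt.
    change (((tk k * enorm (uk k)) `^ g)^-1 * enorm (ybar - y k) <= fine (setdist_rV ybar (Phi (xbar + tk k *: uk k)) *
       (((tk k * enorm (uk k)) `^ g)^-1)%:E)%E + k.+1%:R^-1).
    rewrite -(fineK dfin) -EFinM /=.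
    apply: le_trans (ler_wpM2l _ (ltW Hlt)) _; first by rewrite invr_ge0 powR_ge0.
    by rewrite mulrDr mulKf ?gt_eqF // [_^-1 * fine _]mulrC.
  by rewrite normr0 lexx /= addr_ge0 // invr_ge0 ler0n.
- move=> k; rewrite /epi /uk' /ak' /=; destruct (pselect (good k)) as [gk|ngk] => /=.
    have [tp _] := gk.
    by rewrite mulrC divfK ?gt_eqF ?powR_gt0 // -lerBlDl le_max lexx orbT.
  by rewrite scaler0 addr0 mulr0 addr0.
- move=> k; rewrite /gph /uk' /vk' /=; destruct (pselect (good k)) as [gk|ngk] => /=.
    have [tp _] := gk.
    rewrite scalerA divff ?gt_eqF ?powR_gt0 // scale1r (addrC ybar) subrK; exact: (Hy k gk).1.
  by rewrite !scaler0 !addr0.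
Unshelve. all: end_near.
Qed.

Lemma part2 : critical phi Phi ybar xbar g g u <->
    kerD (Mmap phi Phi) g xbar (phi xbar, ybar) u.
Proof.
split.
- move=> [uk [ak [vk [tk [Hu [Ha [Hv [Ht [He Hg]]]]]]]]].
  exists uk, (fun k => (ak k, vk k)), tk; split => //; split.
    have := @cvg_pair _ _ _ _ _ _ eventually_filter (nbhs_filter (0:R)) (nbhs_filter (0 : 'rV[R]_m)) ak vk Ha Hv. exact.
  split => // k; split; [exact: (He k) | exact: (Hg k)].
- move=> [uk [wk [tk [Hu [Hw [Ht HM]]]]]].
  exists uk, (fun k => (wk k).1), (fun k => (wk k).2), tk.
  split => //; split; [|split; [|split => //; split]].
  + exact: (cvg_comp _ _ Hw cvg_fst).
  + exact: (cvg_comp _ _ Hw cvg_snd).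
  + by move=> k; have [] := HM k.
  + by move=> k; have [] := HM k.
Qed.
End Main.

Unset Implicit Arguments.

Theorem proposition4p5 (R : realType) (n m : nat)
  (phi : 'rV[R]_n -> R) (Phi : 'rV[R]_n -> set 'rV[R]_m)
  (ybar : 'rV[R]_m) (xbar : 'rV[R]_n) (g0 g : R) (u : 'rV[R]_n) :
  locally_lipschitz phi ->
  closed (gph Phi) ->
  (exists x, Phi x ybar) ->
  Phi xbar ybar ->
  1 <= g0 -> 1 <= g ->
  enorm u = 1 ->
  (critical phi Phi ybar xbar g0 g u <->
   exists (uk : nat -> 'rV[R]_n) (tk : nat -> R),
     uk @ \oo --> u /\ tends_down_to0 tk /\
     (fun k => (setdist_R (phi xbar) (M0 phi (xbar + tk k *: uk k)%R)
                * ((powR (tk k * enorm (uk k)) g0)^-1)%R%:E)%E) @ \oo --> (0 : \bar R) /\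
     (fun k => (setdist_rV ybar (Phi (xbar + tk k *: uk k)%R)
                * ((powR (tk k * enorm (uk k)) g)^-1)%R%:E)%E) @ \oo --> (0 : \bar R))
  /\
  (g0 = g ->
   (critical phi Phi ybar xbar g0 g u <->
    kerD (Mmap phi Phi) g xbar (phi xbar, ybar) u)).
Proof.
move=> _ _ _ Hx g01 g1 u1; split.
  split; [exact: part1_fwd | exact: part1_bwd].
move=> e; subst g0; exact: part2.
Qed.
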